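(* Let $P\in\mathfrak N_2$ and let $R$ be a retract of $P$ of width three which is a tower of nice sections. If $S$ is an ordinal summand of $R$ (in its decomposition into nice sections) which is a nice section of width three, then $S=P(k\to\ell)$ for some level indices $k<\ell$ of $P$.
   Context: All posets are finite; $h_P$ is the height; level sets $P(0)=\min P$, $P(k+1)=\min(P\setminus\bigcup_{i\le k}P(i))$; $P(k\to\ell)=\bigcup_{i=k}^\ell P(i)$ as induced subposet; $A<B$ means $a<b$ for all $a\in A,b\in B$. A retract is the image of an idempotent order-preserving self-map. A section is either a 2-element antichain or a poset $P$ of height $h_P\ge1$ with carrier $\{c_{k,j}:k\in[0,h_P],j\in\{0,1,2\}\}$ such that: $c_{0,j}<\dots<c_{h_P,j}$ for each $j$; each $\{c_{k,0},c_{k,1},c_{k,2}\}$ is an antichain; $c_{k,i}<c_{\ell,j}\Rightarrow c_{k,i+1}<c_{\ell,j+1}$ (indices mod 3); and for no $k$ is $P(k)<P(k+1)$ (the latter kind is a section of width three). A section is nice if for all $x<y$: $\{z:z>x\}\not\subseteq\{z:z\ge y\}$ and $\{z:z<y\}\not\subseteq\{z:z\le x\}$. A tower of nice sections is an ordinal sum of nice sections (the decomposition is unique). $\mathfrak N_2$ is the class of nice sections of width three of height $\ge2$ with horizon 2, i.e. $P(k)<P(\ell)$ whenever $\ell\ge k+2$. *)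

(* Defs.v *)
(* Finite posets are finite partially ordered types;
   sub-posets (sections, retracts, level unions) are subsets with the
   induced order. *)
From HB Require Import structures.
From mathcomp Require Import all_boot all_order.
Set Implicit Arguments. Unset Strict Implicit. Unset Printing Implicit Defensive.
Import Order.Theory.

Section PosetDefs.
Context {d : Order.disp_t} {T : finPOrderType d}.
Implicit Types (A B P R S : {set T}).

Definition minset A : {set T} := [set x in A | [forall y in A, ~~ (y < x)%O]].

Fixpoint rest A (k : nat) : {set T} :=
  if k is k'.+1 then rest A k' :\: minset (rest A k') else A.

(* level sets: A(0) = min A, A(k+1) = min (A \ U_{i<=k} A(i)) *)
Definition level A (k : nat) : {set T} := minset (rest A k).

Definition levels_between A (k l : nat) : {set T} :=
  \bigcup_(k <= i < l.+1) level A i.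

(* height: largest index of a nonempty level (= length of a longest chain minus 1) *)
Definition height A : nat :=
  (\max_(i < #|T|.+1 | level A i != set0) (i : nat))%N.

Definition set_lt (X Y : {set T}) : bool :=
  [forall x in X, forall y in Y, (x < y)%O].

Definition antichain A : bool := [forall x in A, forall y in A, ~~ (x < y)%O].

Definition width A : nat :=
  (\max_(B : {set T} | (B \subset A) && antichain B) #|B|)%N.

Definition is_section A : Prop :=
  (#|A| = 2 /\ antichain A) \/
  (exists c : nat -> 'I_3 -> T,
     let h := height A in
     [/\ (1 <= h)%N,
         A = ([set c (nat_of_ord k) j | k : 'I_(h.+1), j : 'I_3]),
         (forall k k' j j', (k <= h)%N -> (k' <= h)%N -> c k j = c k' j' ->
              k = k' /\ j = j'),
         (forall k j, (k < h)%N -> (c k j < c k.+1 j)%O) &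
       [/\ (forall k i j, (k <= h)%N -> i != j -> ~~ (c k i < c k j)%O),
         (forall k l i j, (k <= h)%N -> (l <= h)%N -> (c k i < c l j)%O ->
              (c k (ordS i) < c l (ordS j))%O) &
         (forall k, (k < h)%N -> ~~ set_lt (level A k) (level A k.+1))]]).

Definition nice A : Prop :=
  forall x y, x \in A -> y \in A -> (x < y)%O ->
    ~~ ([set z in A | (x < z)%O] \subset [set z in A | (y <= z)%O]) /\
    ~~ ([set z in A | (z < y)%O] \subset [set z in A | (z <= x)%O]).

Definition in_N2 P : Prop :=
  [/\ is_section P, nice P, width P = 3%N, (2 <= height P)%N &
      (forall k l, (k.+2 <= l)%N -> set_lt (level P k) (level P l))].

Definition is_retract R P : Prop :=
  exists f : T -> T,
    [/\ (forall x, x \in P -> f x \in P),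
        (forall x y, x \in P -> y \in P -> (x <= y)%O -> (f x <= f y)%O),
        (forall x, x \in P -> f (f x) = f x) &
        R = f @: P].

Definition tower_decomp R (ss : seq {set T}) : Prop :=
  [/\ R = \bigcup_(S <- ss) S,
      (forall S, S \in ss -> is_section S /\ nice S) &
      (forall i j, (i < j)%N -> (j < size ss)%N ->
          set_lt (nth set0 ss i) (nth set0 ss j))].

End PosetDefs.

(* Main.v *)
Require Import Defs.
From HB Require Import structures.
From mathcomp Require Import all_boot all_order.
From mathcomp Require Import zify.
Set Implicit Arguments. Unset Strict Implicit. Unset Printing Implicit Defensive.
Import Order.Theory.

Section Gen.
Context {d : Order.disp_t} {T : finPOrderType d}.
Implicit Types (A B : {set T}).

Lemma minsP A x : reflect (x \in A /\ forall y, y \in A -> ~~ (y < x)%O) (x \in Defs.minset A).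
Proof.
rewrite /Defs.minset inE; apply: (iffP andP) => [[xA /forall_inP H]|[xA H]]; split => //.
by apply/forall_inP.
Qed.

Lemma mins_sub A : Defs.minset A \subset A.
Proof. by apply/subsetP => x /minsP []. Qed.

Lemma mins_n0 A : A != set0 -> Defs.minset A != set0.
Proof.
case/set0Pn => x0 xA0.
pose F x := #|[set y in A | (y < x)%O]|.
case: (arg_minnP F xA0) => x xA Hmin.
apply/set0Pn; exists x; apply/minsP; split => // y yA; apply/negP => yx.
have : F x <= F y by exact: Hmin.
rewrite leqNgt; move/negP; apply.
rewrite /F; apply: proper_card; apply/properP; split.
  apply/subsetP => z; rewrite !inE => /andP [zA zy]; rewrite zA /=.
  exact: lt_trans zy yx.
exists y; first by rewrite inE yA.
by rewrite inE ltxx andbF.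
Qed.

Lemma rest_sub A k : rest A k.+1 \subset rest A k.
Proof. by rewrite /= subDset subsetUr. Qed.

Lemma rest_subn A k l : k <= l -> rest A l \subset rest A k.
Proof.
move/subnK <-; elim: (l - k) => [|n IH]; first by rewrite add0n.
rewrite addSn; exact: subset_trans (rest_sub _ _) IH.
Qed.

Lemma rest_card A k : rest A k != set0 -> k + #|rest A k| <= #|A|.
Proof.
elim: k => [|k IH] /= H; first by rewrite add0n.
have Hk : rest A k != set0.
  apply: contraNneq H => Hk; rewrite Hk; by rewrite set0D.
have := IH Hk.
have Hm := mins_n0 Hk.
suff : #|rest A k :\: Defs.minset (rest A k)| < #|rest A k| by move=> H1 H2; rewrite addSnnS; apply: leq_trans H2; rewrite leq_add2l.
apply: proper_card; apply/properP; split; first by rewrite subDset subsetUr.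
case/set0Pn: Hm => x Hx; exists x; first by move/minsP: Hx => [].
by rewrite inE Hx.
Qed.

Lemma level_sub A k : level A k \subset A.
Proof.
exact: subset_trans (mins_sub _) (rest_subn A (leq0n k)).
Qed.

Lemma level_bound A k x : x \in level A k -> k < #|A|.
Proof.
move=> xl.
have Hn : rest A k != set0 by apply/set0Pn; exists x; move/minsP: xl => [].
have := rest_card Hn.
have : 0 < #|rest A k| by rewrite card_gt0.
lia.
Qed.

Lemma level_exists A x : x \in A -> exists k, x \in level A k.
Proof.
move=> xA.
suff H : forall n k, n + k = #|A|.+1 -> x \in rest A k -> exists k, x \in level A k.
  by apply: (H #|A|.+1 0) => //; rewrite addn0.
elim => [|n IH] k Hk xk.
  have Hn : rest A k != set0 by apply/set0Pn; exists x.
  have := rest_card Hn; rewrite add0n in Hk; rewrite Hk; lia.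
case Hm: (x \in Defs.minset (rest A k)); first by exists k.
apply: (IH k.+1); first by rewrite addnS.
by rewrite /= inE Hm xk.
Qed.

Lemma level_lt A a b x y : x \in level A a -> y \in level A b -> (x < y)%O -> a < b.
Proof.
move=> xa yb xy; rewrite ltnNge; apply/negP => ba.
move/minsP: yb => [yb Hy].
have xb : x \in rest A b.
  move/minsP: xa => [xa _]; exact: (subsetP (rest_subn A ba)).
by move: (Hy x xb); rewrite xy.
Qed.

Lemma level_uniq A a b x : x \in level A a -> x \in level A b -> a = b.
Proof.
move=> xa xb.
suff H : forall a b, a < b -> x \in level A a -> x \in level A b -> False.
  case: (ltngtP a b) => // Hab; [exact: (False_ind _ (H _ _ Hab xa xb))|exact: (False_ind _ (H _ _ Hab xb xa))].
move=> {xa xb} a' b' ab xa xb.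
move/minsP: xb => [xb _].
have : x \in rest A a'.+1 by exact: (subsetP (rest_subn A ab)).
by rewrite /= inE xa.
Qed.

Lemma level_anti A k x y : x \in level A k -> y \in level A k -> ~~ (x < y)%O.
Proof.
move=> xk yk; apply/negP => xy; have := level_lt xk yk xy; by rewrite ltnn.
Qed.

Lemma antichain_level A k : antichain (level A k).
Proof. rewrite /antichain; apply/forall_inP => x xk. apply/forall_inP => y yk. exact: (level_anti xk yk). Qed.

Lemma width_card A : width A <= #|A|.
Proof. rewrite /width; apply/bigmax_leqP => B /andP [BA _]; exact: subset_leq_card. Qed.

Lemma card_le_width A B : B \subset A -> antichain B -> #|B| <= width A.
Proof. move=> BA aB; apply: (@leq_bigmax_cond _ (fun B : {set T} => (B \subset A) && antichain B)); by rewrite BA. Qed.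

End Gen.

Section Sec.
Context {d : Order.disp_t} {T : finPOrderType d}.
Variables (S : {set T}) (c : nat -> 'I_3 -> T) (h : nat).
Hypothesis HS : S = [set c (nat_of_ord k) j | k : 'I_(h.+1), j : 'I_3].
Hypothesis Hinj : forall k k' j j', k <= h -> k' <= h -> c k j = c k' j' -> k = k' /\ j = j'.
Hypothesis Hch : forall k j, k < h -> (c k j < c k.+1 j)%O.
Hypothesis Han : forall k i j, k <= h -> i != j -> ~~ (c k i < c k j)%O.

Lemma memS x : x \in S <-> exists k j, k <= h /\ x = c k j.
Proof.
rewrite HS; split.
  by case/imset2P => k j _ _ ->; exists k, j; split => //; rewrite -ltnS ltn_ord.
case=> k [j [kh ->]]; apply/imset2P; exists (Ordinal (kh : k < h.+1)) j => //.
Qed.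

Lemma chain_lt k k' j : k < k' -> k' <= h -> (c k j < c k' j)%O.
Proof.
move=> kk'; elim: k' kk' => [//|k' IH] kk' k'h.
rewrite ltnS leq_eqVlt in kk'; case/orP: kk' => [/eqP ->|kk']; first exact: Hch.
apply: lt_trans (IH kk' (ltnW k'h)) (Hch _ k'h).
Qed.

Lemma minrow k x : k <= h -> (forall y, y \in rest S k <-> exists k' j, k <= k' /\ k' <= h /\ y = c k' j) ->
   (x \in Defs.minset (rest S k) <-> exists j, x = c k j).
Proof.
move=> kh Hr; split.
  case/minsP => /Hr [k' [j [kk' [k'h ->]]]] Hmin; exists j.
  case: (ltngtP k k') kk' => // [lt _|-> //].
  have H1 : c k j \in rest S k by apply/Hr; exists k, j.
  by move: (Hmin _ H1); rewrite (chain_lt j lt k'h).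
case=> j ->; apply/minsP; split; first by apply/Hr; exists k, j.
move=> y /Hr [k' [j' [kk' [k'h ->]]]]; apply/negP => lt.
rewrite leq_eqVlt in kk'; case/orP: kk' => [/eqP eqk|kk']; last first.
  have lt2 := lt_trans (chain_lt j' kk' k'h) lt.
  case: (eqVneq j' j) lt2 => [->|ne]; first by rewrite ltxx.
  by move/negP: (Han kh ne).
subst k'; case: (eqVneq j' j) lt => [->|ne]; first by rewrite ltxx.
by move/negP: (Han kh ne).
Qed.

Lemma restS k : k <= h -> forall y, y \in rest S k <-> exists k' j, k <= k' /\ k' <= h /\ y = c k' j.
Proof.
elim: k => [|k IH] kh y.
  rewrite /= memS; split; first by case=> k [j [? ->]]; exists k, j.
  by case=> k [j [_ [? ->]]]; exists k, j.
have IH' := IH (ltnW kh).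
rewrite /= inE; split.
  case/andP => ym /IH' [k' [j [kk' [k'h eqy]]]]; subst y; exists k', j; split; last by split.
  rewrite leq_eqVlt in kk'; case/orP: kk' => [/eqP eqk|//]; subst k'.
  by exfalso; move/negP: ym; apply; apply/(minrow _ (ltnW kh) IH'); exists j.
case=> k' [j [kk' [k'h ->]]]; apply/andP; split.
  apply/negP => /(minrow _ (ltnW kh) IH') [j' eq].
  by case: (Hinj k'h (ltnW kh) eq) => eqk _; move: kk'; rewrite eqk ltnn.
by apply/IH'; exists k', j; split => //; exact: ltnW.
Qed.

Lemma levelS k : k <= h -> level S k = [set c k j | j : 'I_3].
Proof.
move=> kh; apply/setP => x; rewrite /level.
apply/idP/imsetP.
  by move/(minrow _ kh (restS kh)) => [j ->]; exists j.
by case=> j _ ->; apply/(minrow _ kh (restS kh)); exists j.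
Qed.

End Sec.

Lemma pigeon3 (a b c e : 'I_3) : a != b -> c != e -> a != c -> a != e -> b != c -> b != e -> False.
Proof.
by case: a => [[|[|[|?]]] ?]; case: b => [[|[|[|?]]] ?]; case: c => [[|[|[|?]]] ?]; case: e => [[|[|[|?]]] ?].
Qed.

Lemma cyc3 (a b : 'I_3) : b = a \/ b = ordS a \/ b = ordS (ordS a).
Proof.
suff : [|| b == a, b == ordS a | b == ordS (ordS a)] by case/or3P => /eqP; tauto.
by case: a => [[|[|[|?]]] ?]; case: b => [[|[|[|?]]] ?].
Qed.

Section Pure.
Context {d : Order.disp_t} {T : finPOrderType d}.
Variables (c : nat -> 'I_3 -> T) (m : nat) (lv : T -> nat).
Hypothesis H1 : forall k k' j j', k <= m -> k' <= m -> (c k j < c k' j')%O -> lv (c k j) < lv (c k' j').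
Hypothesis H2 : forall k k' j j', k <= m -> k' <= m -> lv (c k j) + 2 <= lv (c k' j') -> (c k j < c k' j')%O.
Hypothesis Hch : forall k j, k < m -> (c k j < c k.+1 j)%O.
Hypothesis Han : forall k i j, k <= m -> i != j -> ~~ (c k i < c k j)%O.
Hypothesis NF : forall k j, k < m -> exists j', ~~ (c k j < c k.+1 j')%O.
Hypothesis NF' : forall k j', k < m -> exists j, ~~ (c k j < c k.+1 j')%O.

Lemma H2' k k' j j' : k <= m -> k' <= m -> ~~ (c k j < c k' j')%O -> lv (c k' j') < lv (c k j) + 2.
Proof.
move=> km k'm /negP H; rewrite ltnNge; apply/negP => Hle; apply: H; exact: H2.
Qed.

Lemma lvch k j : k < m -> lv (c k j) < lv (c k.+1 j).
Proof. move=> km; apply: H1 => //; [exact: ltnW|exact: Hch]. Qed.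

Lemma lvan k i j : k <= m -> i != j -> lv (c k j) < lv (c k i) + 2.
Proof. move=> km ij; apply: H2' => //; exact: Han. Qed.

Lemma pure_lt k x y : k <= m -> 0 < m -> lv (c k x) < lv (c k y) -> False.
Proof.
move=> km m0 lxy.
have xy : x != y by apply: contraTneq lxy => ->; rewrite ltnn.
move Ea: (lv (c k x)) => a.
have ly : lv (c k y) = a.+1.
  have := lvan km xy; lia.
have lo t : a <= lv (c k t).
  case: (eqVneq t y) => [->|ty]; first by rewrite ly.
  have := lvan km ty; rewrite ly; lia.
have hi t : lv (c k t) <= a.+1.
  case: (eqVneq t x) => [->|tx]; first by rewrite Ea.
  have xt : x != t by rewrite eq_sym.
  have := lvan km xt; lia.
case: k km lo hi ly lxy Ea => [|k0] km lo hi ly lxy Ea.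
  case: (NF x m0) => t nt.
  have lt1 := H2' (leq0n _) m0 nt.
  have lt2 := lvch t m0.
  have lt0 : lv (c 0 t) = a by move: (lo t); lia.
  have tx : t != x by apply: contraNneq nt => ->; exact: Hch.
  have ty : t != y by apply/eqP => E; rewrite E ly in lt0; lia.
  case: (NF' y m0) => u nu.
  have lu1 := H2' (leq0n _) m0 nu.
  have lu2 := lvch y m0.
  have lu0 : lv (c 0 u) = a.+1 by move: (hi u); rewrite ly in lu2; lia.
  have uy : u != y by apply: contraNneq nu => ->; exact: Hch.
  have ux : u != x by apply/eqP => E; rewrite E Ea in lu0; lia.
  have ut : u != t by apply/eqP => E; rewrite E lt0 in lu0; lia.
  by apply: (@pigeon3 x t y u); rewrite // eq_sym.
have k0m : k0 < m by [].
have k0m' : k0 <= m by exact: ltnW.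
case: (NF' y k0m) => u nu.
have lu1 := H2' k0m' km nu.
have lu2 := lvch u k0m.
have lu0 : lv (c k0.+1 u) = a.+1 by move: (hi u); rewrite ly in lu1; lia.
have uy : u != y by apply: contraNneq nu => ->; exact: Hch.
have ux : u != x by apply/eqP => E; rewrite E Ea in lu0; lia.
case: (NF x k0m) => t nt.
have lt1 := H2' k0m' km nt.
have lt2 := lvch x k0m.
have lt0 : lv (c k0.+1 t) = a by move: (lo t); rewrite Ea in lt2; lia.
have tx : t != x by apply: contraNneq nt => ->; exact: Hch.
have ty : t != y by apply/eqP => E; rewrite E ly in lt0; lia.
have ut : u != t by apply/eqP => E; rewrite E lt0 in lu0; lia.
by apply: (@pigeon3 x t y u); rewrite // eq_sym.
Qed.

Lemma pure k j j' : k <= m -> 0 < m -> lv (c k j) = lv (c k j').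
Proof.
move=> km m0; case: (ltngtP (lv (c k j)) (lv (c k j'))) => // H.
  by case: (pure_lt km m0 H).
by case: (pure_lt km m0 H).
Qed.
End Pure.

Lemma mem_bigcup_list {d : Order.disp_t} {T : finPOrderType d} (r : seq nat) (F : nat -> {set T}) x :
  (x \in \bigcup_(i <- r) F i) = has (fun i => x \in F i) r.
Proof. by elim: r => [|i r IH]; rewrite ?big_nil ?big_cons ?inE //= IH. Qed.

Theorem corollary5p1 (d : Order.disp_t) (T : finPOrderType d)
    (P R : {set T}) (ss : seq {set T}) (S : {set T}) :
  in_N2 P ->
  is_retract R P ->
  width R = 3%N ->
  tower_decomp R ss ->
  S \in ss -> is_section S -> nice S -> width S = 3%N ->
  exists k l : nat, (k < l)%N /\ S = levels_between P k l.
Proof.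
move=> [Psec Pnice wP hP hor] [f [fP fmono fid eR]] _ [RU Hss Hlt] Sin Hsec Hnice wS.
subst R.
have SP : S \subset P.
  apply/subsetP => x xS.
  have : x \in \bigcup_(S0 <- ss) S0.
    rewrite bigcup_seq; exact: (subsetP (bigcup_sup _ Sin)).
  by rewrite -RU => /imsetP [y yP ->]; exact: fP.
case: Hsec => [[cS2 _]|[c]].
  by have := width_card S; rewrite wS cS2.
move=> /= [h1 HS Hinj Hch [Han Hsh Hnf]].
move: h1 HS Hinj Hch Han Hsh Hnf; set m := height S => h1 HS Hinj Hch Han Hsh Hnf.
have memS := memS HS.
have cS k j : k <= m -> c k j \in S by move=> km; apply/memS; exists k, j.
have cP k j : k <= m -> c k j \in P by move=> km; exact: (subsetP SP _ (cS k j km)).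
pose lv x := if [pick k : 'I_#|T| | x \in level P k] is Some k then val k else 0.
have lvP x : x \in P -> x \in level P (lv x).
  move=> xP; rewrite /lv; case: pickP => [k //|H].
  case: (level_exists xP) => k0 Hk0.
  have kb : k0 < #|T| by apply: leq_trans (level_bound Hk0) (max_card _).
  by move: (H (Ordinal kb)); rewrite /= Hk0.
have L1 x y : x \in P -> y \in P -> (x < y)%O -> lv x < lv y.
  by move=> xP yP; apply: level_lt (lvP x xP) (lvP y yP).
have L2 x y : x \in P -> y \in P -> lv x + 2 <= lv y -> (x < y)%O.
  move=> xP yP H; have H' : (lv x).+2 <= lv y by lia.
  have := hor _ _ H'; rewrite /set_lt.
  by move/forall_inP/(_ x (lvP x xP))/forall_inP/(_ y (lvP y yP)).
have levS := levelS HS Hinj Hch Han.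
have rowlt k : k < m -> (forall j j', (c k j < c k.+1 j')%O) -> False.
  move=> km H; move: (Hnf k km); rewrite levS ?levS //; last exact: ltnW.
  move/negP; apply; rewrite /set_lt.
  apply/forall_inP => x /imsetP [j _ ->].
  apply/forall_inP => y /imsetP [j' _ ->]; exact: H.
have NF k j0 : k < m -> exists j', ~~ (c k j0 < c k.+1 j')%O.
  move=> km.
  case: (boolP [exists j', ~~ (c k j0 < c k.+1 j')%O]) => [/existsP //|/existsPn Hall].
  exfalso; apply: (rowlt k km) => j j'.
  have A0 j1 : (c k j0 < c k.+1 j1)%O by move: (Hall j1); rewrite negbK.
  have sh i : (forall j1, (c k i < c k.+1 j1)%O) -> forall j1, (c k (ordS i) < c k.+1 j1)%O.
    move=> Hi j1; rewrite -(ord_predK j1); apply: Hsh => //; exact: ltnW.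
  case: (cyc3 j0 j) => [->|[->|->]]; [exact: A0 | exact: (sh _ A0) | exact: (sh _ (sh _ A0))].
have NF' k j0 : k < m -> exists j, ~~ (c k j < c k.+1 j0)%O.
  move=> km.
  case: (boolP [exists j, ~~ (c k j < c k.+1 j0)%O]) => [/existsP //|/existsPn Hall].
  exfalso; apply: (rowlt k km) => j j'.
  have A0 j1 : (c k j1 < c k.+1 j0)%O by move: (Hall j1); rewrite negbK.
  have sh i : (forall j1, (c k j1 < c k.+1 i)%O) -> forall j1, (c k j1 < c k.+1 (ordS i))%O.
    move=> Hi j1; rewrite -(ord_predK j1); apply: Hsh => //; exact: ltnW.
  case: (cyc3 j0 j') => [->|[->|->]]; [exact: A0 | exact: (sh _ A0) | exact: (sh _ (sh _ A0))].
have H1 k k' j j' : k <= m -> k' <= m -> (c k j < c k' j')%O -> lv (c k j) < lv (c k' j').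
  move=> km k'm; apply: L1; exact: cP.
have H2 k k' j j' : k <= m -> k' <= m -> lv (c k j) + 2 <= lv (c k' j') -> (c k j < c k' j')%O.
  move=> km k'm; apply: L2; exact: cP.
have pur k j j' : k <= m -> lv (c k j) = lv (c k j').
  move=> km; exact: (pure H1 H2 Hch Han NF NF' j j' km h1).
pose a k := lv (c k ord0).
have rowk k : k <= m -> level P (a k) = [set c k j | j : 'I_3].
  move=> km; apply/eqP; rewrite eq_sym eqEcard; apply/andP; split.
    apply/subsetP => x /imsetP [j _ ->]; rewrite /a (pur k ord0 j km).
    exact: lvP (cP k j km).
  rewrite card_imset; last by move=> j j' /(Hinj _ _ _ _ km km) [].
  rewrite card_ord -wP; apply: card_le_width; [exact: level_sub | exact: antichain_level].
have step k : k < m -> a k.+1 = (a k).+1.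
  move=> km.
  have lt1 : a k < a k.+1 by apply: H1 => //; [exact: ltnW | exact: Hch].
  case: (ltngtP (a k.+1) (a k).+1) => // H; first by lia.
  exfalso; apply: (rowlt k km) => j j'; apply: H2 => //; first exact: ltnW.
  by rewrite -(pur k ord0 j (ltnW km)) -(pur k.+1 ord0 j' km) -/(a k) -/(a k.+1); lia.
have ak k : k <= m -> a k = a 0 + k.
  elim: k => [|k IH] km; first by rewrite addn0.
  by rewrite step // IH ?addnS //; exact: ltnW.
exists (a 0), (a 0 + m); split; first lia.
apply/setP => x; rewrite /levels_between mem_bigcup_list; apply/idP/hasP.
  move/memS => [k [j [km ->]]]; exists (a 0 + k); first by rewrite mem_index_iota; lia.
  by rewrite -ak // rowk //; apply/imsetP; exists j.
move=> [i]; rewrite mem_index_iota => /andP [i1 i2] xi.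
have km : i - a 0 <= m by lia.
move: xi; have -> : i = a (i - a 0) by rewrite ak //; lia.
rewrite rowk // => /imsetP [j _ ->]; exact: cS.
Qed.
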